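(* There exist rings $R\supseteq S$ (with the same $1$) and a central idempotent $e$ of $R$ such that $R=Se+S(1-e)$, $S$ is finitely presented as a ring, but $R$ is not finitely presented as a ring.
   Context: A ring is finitely presented if it is isomorphic to $F/I$ where $F$ is a free ring (free $\mathbb{Z}$-algebra with $1$) on finitely many generators and $I$ is a two-sided ideal of $F$ generated by finitely many elements. *)

(* Defs.v *)
From HB Require Import structures.
From mathcomp Require Import all_boot all_algebra.
From mathcomp.multinomials Require Import monalg.

Set Implicit Arguments.
Unset Strict Implicit.
Unset Printing Implicit Defensive.

Import GRing.Theory.
Local Open Scope ring_scope.

(* The free ring (free Z-algebra with 1) on n generators: the monoid ring
   Z[<x_0,...,x_{n-1}>] of the free monoid {fmonom 'I_n} on 'I_n. *)
Definition free_ring (n : nat) : nzRingType := {malg int[{fmonom 'I_n}]}.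

Definition in_twosided_ideal (A : nzRingType) (m : nat) (rels : 'I_m -> A)
    (p : A) : Prop :=
  exists s : seq (A * 'I_m * A),
    p = \sum_(t <- s) (t.1.1 * rels t.1.2 * t.2).

(* R is finitely presented: R is isomorphic to F/I with F free on finitely
   many generators and I a finitely generated two-sided ideal; equivalently
   (first isomorphism theorem, written out) there is a surjective ring
   morphism F -> R whose kernel is exactly I. *)
Definition finitely_presented (R : nzRingType) : Prop :=
  exists (n m : nat) (rels : 'I_m -> free_ring n)
         (f : {rmorphism free_ring n -> R}),
    (forall r : R, exists p : free_ring n, f p = r) /\
    (forall p : free_ring n, f p = 0 <-> in_twosided_ideal rels p).

(* Main.v *)
Require Import Defs.
From HB Require Import structures.
From mathcomp Require Import all_boot all_algebra.
From mathcomp.multinomials Require Import monalg.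
From Stdlib Require Import ClassicalEpsilon.
Import GRing.Theory.
Local Open Scope ring_scope.
Local Open Scope quotient_scope.

Section Free.
Variable n : nat.
Local Notation FR := {malg int[{fmonom 'I_n}]}.

Definition fX (i : 'I_n) : free_ring n := << @fmu _ i >>.

Section Ev.
Variables (T : nzRingType) (t : 'I_n -> T).

Definition hmon (m : {fmonom 'I_n}) : T := \prod_(i <- (m : seq _)) t i.

Lemma hmon_mm : mmorphism hmon.
Proof.
split; last by rewrite /hmon fm1 big_nil.
by move=> m1 m2; rewrite /hmon fmM big_cat.
Qed.

HB.instance Definition _ := isMultiplicative.Build {fmonom 'I_n} T hmon hmon_mm.

Definition ev (p : free_ring n) : T := mmap intr hmon p.

Lemma ev_is_additive : additive ev.
Proof. exact: mmap_is_additive. Qed.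

Lemma ev_is_multiplicative : multiplicative ev.
Proof. apply: commr_mmap_is_multiplicative => g m m'; apply/commr_sym/commr_int. Qed.

HB.instance Definition _ := GRing.isAdditive.Build (free_ring n) T ev ev_is_additive.
HB.instance Definition _ := GRing.isMultiplicative.Build (free_ring n) T ev ev_is_multiplicative.

Lemma evX i : ev (fX i) = t i.
Proof. by rewrite /ev /fX mmapU /hmon fmU big_seq1 mul1r. Qed.
End Ev.
Arguments ev {T} t p.
Arguments hmon {T} t m.

Lemma malgU_seq (s : seq 'I_n) :
  (<< @FMonom _ s >> : FR) = \prod_(i <- s) fX i.
Proof.
elim: s => [|i s IH]; first by rewrite big_nil -fmoneE.
rewrite big_cons -IH /fX malgM_def fgmulUU mulr1; congr << _ *g _ >>.
by apply/eqP; rewrite fmP fmM fmU /=.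
Qed.

Lemma rmorph_ev (T : nzRingType) (g : {rmorphism free_ring n -> T}) p :
  g p = ev (fun i => g (fX i)) p.
Proof.
rewrite {1}(monalgE p) rmorph_sum /ev mmapE; apply: eq_bigr => m _.
have -> : (<< p@_m *g m >> : FR) = (p@_m)%:~R * << m >>.
  have E : ((p@_m)%:~R : FR) = (p@_m)%:MP.
    by rewrite -{2}[p@_m]intz rmorph_int.
  by rewrite E malgM_def fgmulUU mulr1 mul1m.
rewrite rmorphM rmorph_int -[m]fmK malgU_seq rmorph_prod.
by rewrite /hmon /=.
Qed.

Lemma free_ext (T : nzRingType) (g1 g2 : {rmorphism free_ring n -> T}) :
  (forall i, g1 (fX i) = g2 (fX i)) -> forall p, g1 p = g2 p.
Proof.
move=> H p; rewrite rmorph_ev [RHS]rmorph_ev.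
rewrite /ev !mmapE; apply: eq_bigr => m _; congr (_ * _).
by rewrite /hmon; apply: eq_bigr => i _.
Qed.

End Free.
Arguments fX {n} i.
Arguments ev {n T} t p.
Arguments hmon {n T} t m.
Arguments evX {n T} t i.
Arguments free_ext {n T} g1 g2 _ p.

Lemma ideal_kill (A T : nzRingType) m (rels : 'I_m -> A) (g : {rmorphism A -> T}) p :
  (forall j, g (rels j) = 0) -> in_twosided_ideal rels p -> g p = 0.
Proof.
move=> H [s ->]; rewrite rmorph_sum big1 // => t _.
by rewrite !rmorphM H mulr0 mul0r.
Qed.

Lemma ideal_gen (A : nzRingType) m (rels : 'I_m -> A) j :
  in_twosided_ideal rels (rels j).
Proof. by exists [:: (1, j, 1)]; rewrite big_seq1 /= mul1r mulr1. Qed.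
Arguments ideal_gen {A m} rels j.
Arguments ideal_kill {A T m} rels g p _ _.

Lemma ev_max (I : finType) (P : I -> nat -> Prop) :
  (forall i, exists M, forall N, (M <= N)%N -> P i N) ->
  exists M, forall i N, (M <= N)%N -> P i N.
Proof.
move=> H.
suff [M HM] : exists M, forall i, i \in enum I -> forall N, (M <= N)%N -> P i N.
  by exists M => i N HN; apply: HM => //; rewrite mem_enum.
elim: (enum I) => [|i s [M HM]]; first by exists 0%N.
have [M' HM'] := H i.
exists (maxn M M') => j; rewrite inE => /orP [/eqP -> | js] N HN.
  by apply: HM'; apply: leq_trans HN; apply: leq_maxr.
by apply: HM => //; apply: leq_trans HN; apply: leq_maxl.
Qed.

Lemma not_fp_crit (Q : nzRingType) (k : nat) (pi : {rmorphism free_ring k -> Q})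
  (T : nat -> nzRingType) (evN : forall N, {rmorphism free_ring k -> T N}) :
  (forall q, exists p, pi p = q) ->
  (forall u, pi u = 0 -> exists M, forall N, (M <= N)%N -> evN N u = 0) ->
  (forall N, exists w, pi w = 0 /\ evN N w != 0) ->
  ~ finitely_presented Q.
Proof.
move=> pisurj HA HB [n [m [rels [f [fsurj fker]]]]].
have pisurjb : forall q, exists p, pi p == q.
  by move=> q; have [p Hp] := pisurj q; exists p; apply/eqP.
have fsurjb : forall q, exists p, f p == q.
  by move=> q; have [p Hp] := fsurj q; exists p; apply/eqP.
pose P i := xchoose (pisurjb (f (fX i))).
pose Qj j := xchoose (fsurjb (pi (fX j))).
pose phi := ev P. pose psi := ev Qj.
have piphi : forall p, pi (phi p) = f p.
  apply: (free_ext (pi \o phi) f) => i /=.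
  by rewrite /phi evX; apply/eqP; exact: (xchooseP (pisurjb (f (fX i)))).
have fpsi : forall u, f (psi u) = pi u.
  apply: (free_ext (f \o psi) pi) => i /=.
  by rewrite /psi evX; apply/eqP; exact: (xchooseP (fsurjb (pi (fX i)))).
have [M1 HM1] := ev_max _ (fun j N => evN N (phi (rels j)) = 0)
  (fun j => HA _ (etrans (piphi _) ((proj2 (fker _)) (ideal_gen rels j)))).
have [M2 HM2] := ev_max _ (fun j N => evN N (fX j - phi (psi (fX j))) = 0)
  (fun j => HA _ (etrans (rmorphB _ _ _) (etrans (congr1 (fun x => _ - x) (etrans (piphi _) (fpsi _))) (subrr _)))).
pose M := maxn M1 M2.
have [w [pw nw]] := HB M.
have H1 : (evN M \o phi) (psi w) = 0.
  apply: (ideal_kill rels) => [j|]; first by apply: HM1; apply: leq_maxl.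
  by apply/fker; rewrite fpsi.
have H2 : forall u, (evN M \o phi \o psi) u = evN M u.
  apply: free_ext => j /=.
  by symmetry; apply/eqP; rewrite -subr_eq0 -rmorphB; apply/eqP; apply: HM2; apply: leq_maxr.
by move: nw; rewrite -H2; move: H1 => /= ->; rewrite eqxx.
Qed.

Section Mats.
Variable N : nat.
Definition xm : 'M[int]_(N.+1) := delta_mx ord_max ord0.
Definition ym : 'M[int]_(N.+1) := \matrix_(i, j) ((i.+1 == j :> nat)%:R).

Lemma ymX k i j : (ym ^+ k) i j = ((i + k == j)%N)%:R.
Proof.
elim: k i j => [|k IH] i j.
  by rewrite expr0 mxE addn0.
rewrite exprSr -mulmxE mxE.
under eq_bigr => l _ do rewrite IH mxE.
case: (ltnP (i + k) N.+1) => H.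
  rewrite (bigD1 (Ordinal H)) //= eqxx mul1r big1 ?addr0 ?addnS //.
  move=> l /negbTE Hl; have -> : (i + k == l)%N = false.
    by apply/negbTE; apply: contraFN Hl => /eqP E; apply/eqP/val_inj.
  by rewrite mul0r.
rewrite big1.
  have -> : (i + k.+1 == j)%N = false.
    by apply/negbTE; rewrite addnS; apply: contraTN (ltn_ord j) => /eqP <-; rewrite -leqNgt ltnW.
  by [].
move=> l _; have -> : (i + k == l)%N = false.
  by apply/negbTE; apply: contraTN (ltn_ord l) => /eqP <-; rewrite -leqNgt.
by rewrite mul0r.
Qed.

Lemma xAx (A : 'M[int]_(N.+1)) : xm * A * xm = A ord0 ord_max *: xm.
Proof.
apply/matrixP => i j; rewrite -!mulmxE !mxE.
rewrite (bigD1 ord_max) //= big1 ?addr0; last first.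
  by move=> l /negbTE Hl; rewrite [delta_mx _ _ l j]mxE Hl /= mulr0.
rewrite [delta_mx _ _ ord_max j]mxE eqxx /= mxE.
rewrite (bigD1 ord0) //= big1 ?addr0; last first.
  by move=> l /negbTE Hl; rewrite [delta_mx _ _ i l]mxE Hl andbF /= mul0r.
rewrite [delta_mx _ _ i ord0]mxE eqxx andbT.
by case: (i == ord_max); case: (j == ord0); rewrite /= ?mul1r ?mulr1 ?mul0r ?mulr0.
Qed.

Lemma xm_neq0 : xm != 0.
Proof. by apply/eqP => /matrixP /(_ ord_max ord0); rewrite !mxE !eqxx. Qed.
End Mats.

Definition tN N (i : 'I_2) : 'M[int]_(N.+1) := if (val i == 0)%N then xm N else ym N.

Definition wN (N : nat) : free_ring 2 := fX ord0 * fX ord_max ^+ N * fX ord0.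

Lemma ev_wN M N : ev (tN M) (wN N) = ((N == M)%N)%:R *: xm M.
Proof.
rewrite /wN !rmorphM rmorphXn /= !evX /tN /= xAx ymX.
by [].
Qed.

Definition pb (P : Prop) : bool := if excluded_middle_informative P then true else false.
Lemma pbP P : reflect P (pb P).
Proof. by rewrite /pb; case: excluded_middle_informative => H; constructor. Qed.

Definition evK (u : free_ring 2) : Prop :=
  exists M, forall N, (M <= N)%N -> ev (tN N) u = 0.

Definition Ipred : {pred free_ring 2} := fun u => pb (evK u).

Lemma IpredP u : reflect (evK u) (u \in Ipred).
Proof. exact: pbP. Qed.

Lemma Ipred_zmod : zmod_closed Ipred.
Proof.
split; first by apply/IpredP; exists 0%N => N _; rewrite rmorph0.
move=> u v /IpredP [M1 H1] /IpredP [M2 H2]; apply/IpredP; exists (maxn M1 M2) => N HN.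
rewrite rmorphB /= H1 ?H2 ?subrr //; apply: leq_trans HN; [exact: leq_maxr|exact: leq_maxl].
Qed.

HB.instance Definition _ := GRing.isZmodClosed.Build (free_ring 2) Ipred Ipred_zmod.

Lemma IpredMl a u : u \in Ipred -> a * u \in Ipred.
Proof.
move=> /IpredP [M H]; apply/IpredP; exists M => N HN.
by rewrite rmorphM /= H // mulr0.
Qed.

Lemma IpredMr a u : u \in Ipred -> u * a \in Ipred.
Proof.
move=> /IpredP [M H]; apply/IpredP; exists M => N HN.
by rewrite rmorphM /= H // mul0r.
Qed.

Definition Q0 := Quotient.quot Ipred.

Lemma piQE (x y : free_ring 2) : (\pi_Q0 x == \pi_Q0 y) = (x - y \in Ipred).
Proof. by rewrite Quotient.idealrBE. Qed.

Definition Qone : Q0 := \pi_Q0 1.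
Definition Qmul (x y : Q0) : Q0 := \pi_Q0 (repr x * repr y).

Lemma pi_Qmul x y : \pi_Q0 (x * y) = Qmul (\pi_Q0 x) (\pi_Q0 y).
Proof.
apply/eqP; rewrite piQE.
set x' := repr (\pi_Q0 x); set y' := repr (\pi_Q0 y).
have hx : x - x' \in Ipred by rewrite -piQE /x' reprK.
have hy : y - y' \in Ipred by rewrite -piQE /y' reprK.
have -> : x * y - x' * y' = (x - x') * y + x' * (y - y').
  by rewrite mulrBl mulrBr addrA subrK.
by apply: rpredD; [apply: IpredMr | apply: IpredMl].
Qed.

Lemma pi_Qadd x y : \pi_Q0 (x + y) = \pi_Q0 x + \pi_Q0 y.
Proof. exact: Quotient.pi_add. Qed.

Lemma QmulA : associative Qmul.
Proof.
move=> x y z; rewrite -[x]reprK -[y]reprK -[z]reprK.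
set a := repr x; set b := repr y; set c := repr z.
rewrite -(pi_Qmul a b) -(pi_Qmul b c) -(pi_Qmul (a * b) c) -(pi_Qmul a (b * c)).
by rewrite mulrA.
Qed.
Lemma Qmul1 : left_id Qone Qmul.
Proof. by move=> x; rewrite -[x]reprK /Qone -(pi_Qmul 1 (repr x)) mul1r. Qed.
Lemma Qmulr1 : right_id Qone Qmul.
Proof. by move=> x; rewrite -[x]reprK /Qone -(pi_Qmul (repr x) 1) mulr1. Qed.
Lemma QmulDl : left_distributive Qmul +%R.
Proof.
move=> x y z; rewrite -[x]reprK -[y]reprK -[z]reprK.
set a := repr x; set b := repr y; set c := repr z.
rewrite -(pi_Qadd a b) -(pi_Qmul (a + b) c) -(pi_Qmul a c) -(pi_Qmul b c).
by rewrite mulrDl pi_Qadd.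
Qed.
Lemma QmulDr : right_distributive Qmul +%R.
Proof.
move=> x y z; rewrite -[x]reprK -[y]reprK -[z]reprK.
set a := repr x; set b := repr y; set c := repr z.
rewrite -(pi_Qadd b c) -(pi_Qmul a (b + c)) -(pi_Qmul a b) -(pi_Qmul a c).
by rewrite mulrDr pi_Qadd.
Qed.

Lemma pi_Q0zero : \pi_Q0 0 = 0.
Proof. exact: pi_zeror. Qed.

Lemma Qone_neq0 : Qone != 0.
Proof.
rewrite /Qone -pi_Q0zero piQE subr0; apply/IpredP => [[M H]].
by move: (H M (leqnn M)); rewrite rmorph1 => /eqP; rewrite oner_eq0.
Qed.

Definition Qr := Q0.
HB.instance Definition _ := GRing.Zmodule.on Qr.
HB.instance Definition _ := GRing.Zmodule_isNzRing.Build Qr QmulA Qmul1 Qmulr1 QmulDl QmulDr Qone_neq0.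

Definition piQ (u : free_ring 2) : Qr := \pi_Q0 u.

Lemma piQ_is_additive : additive piQ.
Proof. by move=> x y; rewrite /piQ pi_Qadd Quotient.pi_opp. Qed.
Lemma piQ_is_multiplicative : multiplicative piQ.
Proof. split; first by move=> x y; rewrite /piQ pi_Qmul.
exact: erefl. Qed.
HB.instance Definition _ := GRing.isAdditive.Build (free_ring 2) Qr piQ piQ_is_additive.
HB.instance Definition _ := GRing.isMultiplicative.Build (free_ring 2) Qr piQ piQ_is_multiplicative.

Lemma piQ_surj (q : Qr) : exists p, piQ p = q.
Proof. by exists (repr q); rewrite /piQ reprK. Qed.

Lemma piQ0 u : piQ u = 0 -> evK u.
Proof.
move=> H; apply/IpredP; rewrite -[u]subr0 -piQE pi_Q0zero; apply/eqP; exact: H.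
Qed.

Lemma piQ0' u : evK u -> piQ u = 0.
Proof.
move=> H; apply/eqP; rewrite /piQ -pi_Q0zero.
rewrite piQE subr0; exact/IpredP.
Qed.
Lemma Qr_not_fp : ~ finitely_presented Qr.
Proof.
apply: (@not_fp_crit Qr 2 piQ (fun N => [the nzRingType of 'M[int]_(N.+1)]) (fun N => ev (tN N)) piQ_surj).
  by move=> u /piQ0.
move=> N; exists (wN N); split.
  apply: piQ0'; exists N.+1 => M HM.
  have E : (N == M)%N = false by apply/negbTE; rewrite neq_ltn HM.
  by rewrite /= ev_wN E /= scale0r.
by rewrite /= ev_wN eqxx scale1r xm_neq0.
Qed.

Lemma ideal_add (A : nzRingType) m (rels : 'I_m -> A) p q :
  in_twosided_ideal rels p -> in_twosided_ideal rels q -> in_twosided_ideal rels (p + q).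
Proof. by move=> [s1 ->] [s2 ->]; exists (s1 ++ s2); rewrite big_cat. Qed.

Lemma fp_snd (A B : nzRingType) : finitely_presented (A * B)%type -> finitely_presented B.
Proof.
move=> [n [m [rels [f [fsurj fker]]]]].
have [p0 Hp0] := fsurj (1, 0).
pose rels' (j : 'I_m.+1) : free_ring n :=
  if unlift ord_max j is Some j' then rels j' else p0.
have r'l : forall j, rels' (lift ord_max j) = rels j by move=> j; rewrite /rels' liftK.
have r'm : rels' ord_max = p0 by rewrite /rels' unlift_none.
exists n, m.+1, rels', (snd \o f); split.
  move=> b; have [p Hp] := fsurj (0, b); exists p; by rewrite /= Hp.
move=> p; split => [/= Hp|].
  have E : f (p - p * p0) = 0.
    rewrite rmorphB rmorphM Hp0.
    case: (f p) Hp => a b /= ->.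
    by rewrite -[(a, 0) * (1, 0)]/(a * 1, 0 * 0) mulr1 mul0r subrr.
  have [s Hs] := (proj1 (fker _)) E.
  have -> : p = (p - p * p0) + p * p0 by rewrite subrK.
  apply: ideal_add.
    exists [seq (t.1.1, lift ord_max t.1.2, t.2) | t <- s].
    by rewrite Hs big_map; apply: eq_bigr => t _ /=; rewrite r'l.
  by exists [:: (p, ord_max, 1)]; rewrite big_seq1 /= r'm mulr1.
apply: ideal_kill => j /=.
case: (unliftP ord_max j) => [j'|] ->; first by rewrite r'l (proj2 (fker _) (ideal_gen rels j')).
by rewrite r'm Hp0.
Qed.

Definition iota (s : free_ring 2) : (free_ring 2 * Qr)%type := (s, piQ s).
Lemma iota_is_additive : additive iota.
Proof. by move=> x y; rewrite /iota rmorphB. Qed.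
Lemma iota_is_multiplicative : multiplicative iota.
Proof. by split => [x y|]; rewrite /iota ?rmorphM ?rmorph1. Qed.
HB.instance Definition _ := GRing.isAdditive.Build (free_ring 2) (free_ring 2 * Qr)%type iota iota_is_additive.
HB.instance Definition _ := GRing.isMultiplicative.Build (free_ring 2) (free_ring 2 * Qr)%type iota iota_is_multiplicative.

Lemma free_fp n : finitely_presented (free_ring n).
Proof.
exists n, 0%N, (fun j : 'I_0 => 0), idfun; split; first by move=> r; exists r.
move=> p; split => [/= ->|[s ->]]; first by exists [::]; rewrite big_nil.
by case: s => [|[[a [j Hj]] b] s] //; rewrite big_nil.
Qed.

Local Close Scope quotient_scope.

Theorem lemma4p1 :
  exists (R S : nzRingType) (iota : {rmorphism S -> R}) (e : R),
    injective iota /\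
    e * e = e /\ (forall r : R, e * r = r * e) /\
    (forall r : R, exists s t : S, r = iota s * e + iota t * (1 - e)) /\
    finitely_presented S /\ ~ finitely_presented R.
Proof.
exists [the nzRingType of (free_ring 2 * Qr)%type], (free_ring 2), iota, (1, 0).
split; first by move=> x y [].
split; first by rewrite -[(1, 0) * (1, 0)]/((1 * 1, 0 * 0) : free_ring 2 * Qr) mulr1 mulr0.
split.
  move=> [a b].
  rewrite -[(1, 0) * (a, b)]/((1 * a, 0 * b) : free_ring 2 * Qr).
  by rewrite -[(a, b) * (1, 0)]/((a * 1, b * 0) : free_ring 2 * Qr) mul1r mulr1 mul0r mulr0.
split.
  move=> [a b]; have [t Ht] := piQ_surj b; exists a, t.
  rewrite /iota.
  rewrite -[(1 : free_ring 2 * Qr)]/(1, 1) -[(1, 1) - (1, 0)]/((1 - 1, 1 - 0) : free_ring 2 * Qr).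
  rewrite -[(a, piQ a) * _]/((a * 1, piQ a * 0) : free_ring 2 * Qr).
  rewrite -[(t, piQ t) * _]/((t * (1 - 1), piQ t * (1 - 0)) : free_ring 2 * Qr).
  by rewrite subrr subr0 !mulr1 !mulr0 Ht -[(_, _) + (_, _)]/((a + 0, 0 + b) : free_ring 2 * Qr) addr0 add0r.
split; first exact: free_fp.
by move/fp_snd; exact: Qr_not_fp.
Qed.
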